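(* There exist smooth nonnegative functions $\rho,\phi$ on $[0,\infty)$, positive on $(0,\infty)$, such that $\rho(0)=1$, all odd-order derivatives of $\rho$ vanish at $0$, $\phi(0)=0$, $\phi'(0)=4$, all even-order derivatives of $\rho\phi$ vanish at $0$, $\rho'\equiv e^{-100}$ on $[2,\infty)$, $\phi\equiv1$ on $[2,\infty)$, and the metric $g_{\rho,\phi}=dr^2+\rho^2(r)\left[\phi^2(r)(\sigma^1)^2+(\sigma^2)^2+(\sigma^3)^2\right]$ on $(0,\infty)\times\mathbb{S}^3$ satisfies $\mathrm{Ric}_{g_{\rho,\phi}}\geq0$.
   Context: Identify $\mathbb{S}^3$ with $SU(2)$ via $(z,w)\mapsto\begin{pmatrix} z&-\bar w\\ w&\bar z\end{pmatrix}$. Let $X_1,X_2,X_3$ be the left-invariant vector fields on $SU(2)$ generated by $\begin{pmatrix}\sqrt{-1}&0\\0&-\sqrt{-1}\end{pmatrix}$, $\begin{pmatrix}0&1\\-1&0\end{pmatrix}$, $\begin{pmatrix}0&\sqrt{-1}\\ \sqrt{-1}&0\end{pmatrix}$, and let $\sigma^1,\sigma^2,\sigma^3$ be the dual left-invariant $1$-forms. Under the stated boundary conditions at $r=0$, $g_{\rho,\phi}$ extends to a smooth metric on the total space of a rank-2 real vector bundle over $S^2$ of Euler number $\pm4$ (and descends to the normal bundle of the standard embedding $\mathbb{R}P^2\subset\mathbb{R}^4$). *)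

(* Defs.v *)
From HB Require Import structures.
From mathcomp Require Import all_boot all_order all_algebra.
From mathcomp Require Import all_classical all_reals all_analysis.
Set Implicit Arguments. Unset Strict Implicit. Unset Printing Implicit Defensive.
Import Order.TTheory GRing.Theory Num.Theory.
Local Open Scope ring_scope.

Section Defs.
Variable R : realType.

(* f : R -> R is smooth (C^infinity): every iterated derivative is differentiable.
   A function on [0,oo) is smooth iff it is the restriction of such a function. *)
Definition smooth (f : R -> R) : Prop :=
  forall (n : nat) (x : R), derivable (derive1n n f) x 1.

(* Global frame on (0,oo) x SU(2):  F_0 = d/dr,  F_i = X_i (i = 1,2,3),
   the left-invariant fields generated by
   X1 = [[i,0],[0,-i]], X2 = [[0,1],[-1,0]], X3 = [[0,i],[i,0]].
   Lie brackets: [F_a, F_b] = sum_c frameC a b c F_c, with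
   [X1,X2] = 2 X3, [X2,X3] = 2 X1, [X3,X1] = 2 X2, [d/dr, X_i] = 0. *)
Definition frameC (a b c : 'I_4) : R :=
  match nat_of_ord a, nat_of_ord b, nat_of_ord c with
  | 1, 2, 3 => 2 | 2, 1, 3 => -2
  | 2, 3, 1 => 2 | 3, 2, 1 => -2
  | 3, 1, 2 => 2 | 1, 3, 2 => -2
  | _, _, _ => 0
  end.

(* Derivative of a function depending only on r along the frame field F_a:
   d/dr differentiates it, the X_i (tangent to the S^3 factor) kill it. *)
Definition frameD (a : 'I_4) (f : R -> R) : R -> R :=
  if nat_of_ord a == 0%N then derive1 f else fun _ => 0.

(* A metric whose frame components G r a b = g(F_a, F_b) depend only on r. *)
Section LeviCivita.
Variable G : R -> 'M[R]_4.

(* Koszul formula: K a b c = g(nabla_{F_a} F_b, F_c). *)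
Definition koszul (a b c : 'I_4) (r : R) : R :=
  (frameD a (fun s => G s b c) r + frameD b (fun s => G s a c) r
   - frameD c (fun s => G s a b) r
   + \sum_(e < 4) frameC a b e * G r e c
   - \sum_(e < 4) frameC a c e * G r e b
   - \sum_(e < 4) frameC b c e * G r e a) / 2.

(* Christoffel symbols: nabla_{F_a} F_b = sum_d christoffel a b d F_d. *)
Definition christoffel (a b d : 'I_4) (r : R) : R :=
  \sum_(c < 4) invmx (G r) d c * koszul a b c r.

(* Riemann tensor: R(F_a,F_b)F_c = sum_e riemann a b c e F_e, where
   R(X,Y)Z = nabla_X nabla_Y Z - nabla_Y nabla_X Z - nabla_[X,Y] Z. *)
Definition riemann (a b c e : 'I_4) (r : R) : R :=
  frameD a (christoffel b c e) r - frameD b (christoffel a c e) r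
  + \sum_(d < 4) (christoffel b c d r * christoffel a d e r
                  - christoffel a c d r * christoffel b d e r)
  - \sum_(d < 4) frameC a b d * christoffel d c e r.

(* Ricci tensor: Ric(F_b, F_c) = trace (X |-> R(X, F_b) F_c). *)
Definition ricci (b c : 'I_4) (r : R) : R :=
  \sum_(a < 4) riemann a b c a r.
End LeviCivita.

(* The metric g_{rho,phi} = dr^2 + rho^2 [phi^2 (s1)^2 + (s2)^2 + (s3)^2]
   in the frame (d/dr, X1, X2, X3). *)
Definition g_rho_phi (rho phi : R -> R) (r : R) : 'M[R]_4 :=
  \matrix_(a < 4, b < 4)
    if a != b then 0
    else if nat_of_ord a == 0%N then 1
    else if nat_of_ord a == 1%N then (rho r * phi r) ^+ 2
    else rho r ^+ 2.

(* Ric >= 0 on (0,oo) x S^3: Ric(v,v) >= 0 for every tangent vector v,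
   written in the frame (components depend only on r). *)
Definition ricci_nonneg (G : R -> 'M[R]_4) : Prop :=
  forall (r : R), 0 < r -> forall v : 'I_4 -> R,
    0 <= \sum_(b < 4) \sum_(c < 4) ricci G b c r * v b * v c.

End Defs.

(* Main.v *)
Require Import Defs.
From HB Require Import structures.
From mathcomp Require Import all_boot all_order all_algebra.
From mathcomp Require Import all_classical all_reals all_analysis.
From mathcomp Require Import ring lra.
Import Order.TTheory GRing.Theory Num.Theory.
Local Open Scope ring_scope.
Set Implicit Arguments. Unset Strict Implicit.

Section S.
Variable R : realType.
Implicit Types f g : R -> R.

Lemma dD f g x df dg : is_derive x (1:R) f df -> is_derive x (1:R) g dg ->
  is_derive x (1:R) (fun y => f y + g y) (df + dg).
Proof. move=> h1 h2; exact: is_deriveD. Qed.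
Lemma dM f g x df dg : is_derive x (1:R) f df -> is_derive x (1:R) g dg ->
  is_derive x (1:R) (fun y => f y * g y) (df * g x + f x * dg).
Proof. move=> h1 h2; have H := is_deriveM h1 h2.
apply: (is_derive_eq H); rewrite /= /GRing.scale /=; ring. Qed.
Lemma dV f x df : f x != 0 -> is_derive x (1:R) f df ->
  is_derive x (1:R) (fun y => (f y)^-1) (- df / (f x) ^+ 2).
Proof. move=> h1 h2; have H := is_deriveV h1 h2.
apply: (is_derive_eq H); rewrite /= /GRing.scale /=; field; exact: h1. Qed.
Lemma dN f x df : is_derive x (1:R) f df -> is_derive x (1:R) (fun y => - f y) (- df).
Proof. move=> h; exact: is_deriveN. Qed.
Lemma dB f g x df dg : is_derive x (1:R) f df -> is_derive x (1:R) g dg ->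
  is_derive x (1:R) (fun y => f y - g y) (df - dg).
Proof. move=> h1 h2; exact: is_deriveB. Qed.
Lemma dC (c : R) x : is_derive x (1:R) (fun _ => c) 0.
Proof. exact: is_derive_cst. Qed.
Lemma dI x : is_derive x (1:R) (fun y : R => y) 1.
Proof. exact: is_derive_id. Qed.
Lemma dE f x df : is_derive x (1:R) f df -> is_derive x (1:R) (fun y => expR (f y)) (expR (f x) * df).
Proof. move=> h; have H := realfun.is_derive1_comp (is_derive_expR (f x)) h; exact: H. Qed.
Lemma dder f x df : is_derive x (1:R) f df -> derive1 f x = df.
Proof. by move=> h; rewrite derive1E derive_val. Qed.
End S.


Section Sm.
Variable R : realType.
Implicit Types f g : R -> R.

Fixpoint Sm (n : nat) (f : R -> R) : Prop :=
  match n with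
  | 0%N => forall x, derivable f x 1
  | m.+1 => (forall x, derivable f x 1) /\ Sm m (derive1 f)
  end.

Definition SM f := forall n, Sm n f.

Lemma Sm_der n f : Sm n f -> forall x, derivable f x 1.
Proof. by case: n => [|n] /= ; [|case]. Qed.

Lemma Sm_S n f : Sm n.+1 f -> Sm n f.
Proof.
elim: n f => [|n IH] f /=; first by case.
by case=> h1 [h2 h3]; split => //; exact: IH.
Qed.

Lemma SM_smooth f : SM f -> smooth f.
Proof.
move=> h n; elim: n f h => [|n IH] f h x; first by rewrite derive1n0; exact: (h 0%N).
rewrite derive1Sn; apply: IH => m; exact: (h m.+1).2.
Qed.

Lemma derive1_ext f F : (forall x, is_derive x (1:R) f (F x)) -> derive1 f = F.
Proof. by move=> h; apply/funext => x; exact: dder. Qed.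

Definition isd f x d := is_derive x (1:R) f d.

Lemma Sm_step n f F : (forall x, isd f x (F x)) -> Sm n F -> Sm n.+1 f.
Proof.
move=> h hF /=; split; first by move=> x; case: (h x).
by rewrite (derive1_ext h).
Qed.

Lemma SM_step f F : (forall x, isd f x (F x)) -> SM F -> SM f.
Proof.
move=> h hF [|n]; last exact: Sm_step h (hF n).
by move=> x; case: (h x).
Qed.

Lemma derP f x : derivable f x 1 -> is_derive x (1:R) f (derive1 f x).
Proof. by move=> h; rewrite derive1E; apply: DeriveDef. Qed.

Lemma Sm_cst n (c : R) : Sm n (fun _ => c).
Proof.
elim: n c => [|n IH] c; first by move=> x; case: (dC c x).
apply: (Sm_step (F := fun _ => 0)); [move=> x; exact: dC|exact: IH].
Qed.

Lemma Sm_id n : Sm n (fun x : R => x).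
Proof.
case: n => [|n]; first by move=> x; case: (dI x).
apply: (Sm_step (F := fun _ => 1)); [move=> x; exact: dI|exact: Sm_cst].
Qed.

Lemma Sm_add n f g : Sm n f -> Sm n g -> Sm n (fun x => f x + g x).
Proof.
elim: n f g => [|n IH] f g hf hg.
  by move=> x; case: (dD (derP (hf x)) (derP (hg x))).
apply: (Sm_step (F := fun x => derive1 f x + derive1 g x)).
  by move=> x; apply: dD; apply: derP; [exact: (hf.1 x)|exact: (hg.1 x)].
exact: IH hf.2 hg.2.
Qed.

Lemma Sm_opp n f : Sm n f -> Sm n (fun x => - f x).
Proof.
elim: n f => [|n IH] f hf.
  by move=> x; case: (dN (derP (hf x))).
apply: (Sm_step (F := fun x => - derive1 f x)).
  by move=> x; apply: dN; apply: derP; exact: (hf.1 x).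
exact: IH hf.2.
Qed.

Lemma Sm_mul n f g : Sm n f -> Sm n g -> Sm n (fun x => f x * g x).
Proof.
elim: n f g => [|n IH] f g hf hg.
  by move=> x; case: (dM (derP (hf x)) (derP (hg x))).
apply: (Sm_step (F := fun x => derive1 f x * g x + f x * derive1 g x)).
  by move=> x; apply: dM; apply: derP; [exact: (hf.1 x)|exact: (hg.1 x)].
apply: Sm_add; apply: IH => //; [exact: hf.2|exact: Sm_S|exact: Sm_S|exact: hg.2].
Qed.

Lemma Sm_inv n g : (forall x, g x != 0) -> Sm n g -> Sm n (fun x => (g x)^-1).
Proof.
move=> g0; elim: n g g0 => [|n IH] g g0 hg.
  by move=> x; case: (dV (g0 x) (derP (hg x))).
apply: (Sm_step (F := fun x => - derive1 g x * ((g x)^-1 * (g x)^-1))).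
  move=> x; apply: is_derive_eq; first by apply: dV (g0 x) (derP (hg.1 x)).
  by rewrite -invrM // ?unitfE ?g0 // expr2.
apply: Sm_mul; first exact: Sm_opp hg.2.
by apply: Sm_mul; apply: IH => //; exact: Sm_S.
Qed.

Lemma Sm_exp n h : Sm n h -> Sm n (fun x => expR (h x)).
Proof.
elim: n h => [|n IH] h hh.
  by move=> x; case: (dE (derP (hh x))).
apply: (Sm_step (F := fun x => expR (h x) * derive1 h x)).
  by move=> x; apply: dE; apply: derP; exact: (hh.1 x).
apply: Sm_mul; [apply: IH; exact: Sm_S|exact: hh.2].
Qed.

Lemma dAff f x (c d : R) df : is_derive (c * x + d) (1:R) f df ->
  is_derive x (1:R) (fun y => f (c * y + d)) (df * c).
Proof.
move=> h.
have h2 : is_derive x (1:R) (fun y => c * y + d) (0 * x + c * 1 + 0).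
  by eapply dD; [eapply dM; [exact: dC|exact: dI]|exact: dC].
rewrite mul0r add0r mulr1 addr0 in h2.
have H := @realfun.is_derive1_comp R f (fun y => c * y + d) x df c h h2.
exact: H.
Qed.

Lemma Sm_aff n f (c d : R) : Sm n f -> Sm n (fun x => f (c * x + d)).
Proof.
elim: n f => [|n IH] f hf.
  by move=> x; case: (dAff (derP (hf (c * x + d)))).
apply: (Sm_step (F := fun x => derive1 f (c * x + d) * c)).
  by move=> x; apply: dAff; apply: derP; exact: (hf.1 _).
apply: Sm_mul; [apply: IH; exact: hf.2|exact: Sm_cst].
Qed.

Lemma SM_add f g : SM f -> SM g -> SM (fun x => f x + g x).
Proof. by move=> h1 h2 n; apply: Sm_add. Qed.
Lemma SM_mul f g : SM f -> SM g -> SM (fun x => f x * g x).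
Proof. by move=> h1 h2 n; apply: Sm_mul. Qed.
Lemma SM_opp f : SM f -> SM (fun x => - f x).
Proof. by move=> h1 n; apply: Sm_opp. Qed.
Lemma SM_inv g : (forall x, g x != 0) -> SM g -> SM (fun x => (g x)^-1).
Proof. by move=> h0 h1 n; apply: Sm_inv. Qed.
Lemma SM_exp f : SM f -> SM (fun x => expR (f x)).
Proof. by move=> h1 n; apply: Sm_exp. Qed.
Lemma SM_aff f c d : SM f -> SM (fun x => f (c * x + d)).
Proof. by move=> h1 n; apply: Sm_aff. Qed.
Lemma SM_cst c : SM (fun _ : R => c).
Proof. by move=> n; apply: Sm_cst. Qed.
Lemma SM_id : SM (fun x : R => x).
Proof. by move=> n; apply: Sm_id. Qed.
Lemma SM_der f : SM f -> forall x, derivable f x 1.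
Proof. by move=> h; exact: (h 0%N). Qed.
Lemma SM_derive f : SM f -> SM (derive1 f).
Proof. by move=> h n; exact: (h n.+1).2. Qed.

End Sm.


Local Open Scope classical_set_scope.
Local Open Scope ring_scope.
Section Gk.
Variable R : realType.
Implicit Types f g : R -> R.

Lemma dX f x df n : is_derive x (1:R) f df ->
  is_derive x (1:R) (fun y => f y ^+ n) (n%:R * f x ^+ n.-1 * df).
Proof.
move=> h; elim: n => [|n IH].
  rewrite mul0r mul0r; have -> : (fun y => f y ^+ 0) = (fun _ => 1) by [].
  exact: dC.
have -> : (fun y => f y ^+ n.+1) = (fun y => f y * f y ^+ n).
  by apply/funext => y; rewrite exprS.
apply: (is_derive_eq (dM h IH)).
case: n {IH} => [|n] /=; first by rewrite !expr0 !mulr1 mul0r mulr0 addr0 mul1r.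
rewrite !exprS -!natr1; ring.
Qed.

Definition Gk (k : nat) (x : R) : R := if 0 < x then (x^-1) ^+ k * expR (- x^-1) else 0.

Lemma Gk_le0 k x : x <= 0 -> Gk k x = 0.
Proof. by rewrite /Gk leNgt => /negPf ->. Qed.

Lemma Gk_gt0 k x : 0 < x -> 0 < Gk k x.
Proof. by move=> hx; rewrite /Gk hx mulr_gt0 ?expR_gt0 // exprn_gt0 // invr_gt0. Qed.

Lemma Gk_ge0 k x : 0 <= Gk k x.
Proof. by case: (ltP 0 x) => hx; [exact: ltW (Gk_gt0 k hx)|rewrite Gk_le0]. Qed.

Lemma Gk_bound k x : 0 < x -> Gk k x <= (k.+1)`!%:R * x.
Proof.
move=> hx; rewrite /Gk hx; set t := x^-1.
have ht : 0 < t by rewrite invr_gt0.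
have hC : 0 < (k.+1)`!%:R :> R by rewrite ltr0n fact_gt0.
have e := expR_ge1Dxn k (ltW ht).
have e2 : t ^+ k.+1 <= (k.+1)`!%:R * expR t.
  rewrite -ler_pdivrMl // mulrC; apply: le_trans e; rewrite lerDr //.
have -> : x = t^-1 by rewrite invrK.
rewrite expRN -subr_ge0.
have hu := expR_gt0 t.
have -> : (k.+1)`!%:R * t^-1 - t ^+ k * (expR t)^-1 =
   ((k.+1)`!%:R * expR t - t ^+ k.+1) / (t * expR t).
  rewrite exprSr; field; rewrite ?gt_eqF //.
by rewrite divr_ge0 ?subr_ge0 // ltW // mulr_gt0.
Qed.

Lemma Gk_succ k h : 0 < h -> Gk k.+1 h = h^-1 * Gk k h.
Proof. by move=> hh; rewrite /Gk hh exprS mulrA. Qed.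

Lemma q_cvg0 (q : R -> R) (C : R) : 0 < C ->
  (forall h, h != 0 -> `|q h| <= C * `|h|) -> q x @[x --> 0^'] --> 0.
Proof.
move=> hC hq; apply/cvgr0Pnorm_lt => e he.
have he' : 0 < e / C by rewrite divr_gt0.
near=> h.
have h0 : h != 0.
  near: h; exact: withinT.
apply: (le_lt_trans (hq h h0)).
rewrite -ltr_pdivlMl // mulrC.
by near: h; exact: dnbhs0_lt.
Unshelve. all: by end_near. Qed.

Lemma dGk0 k : is_derive (0:R) (1:R) (Gk k) 0.
Proof.
set q := fun h : R => h^-1 *: ((Gk k \o shift 0) (h *: (1:R)) - Gk k 0).
have hq : q x @[x --> 0^'] --> 0.
  apply: (@q_cvg0 _ (k.+2)`!%:R); first by rewrite ltr0n fact_gt0.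
  move=> h h0; rewrite /q /= addr0 [Gk k 0]Gk_le0 // subr0 /GRing.scale /= mulr1.
  case: (ltP 0 h) => hh.
    rewrite -Gk_succ // ger0_norm ?Gk_ge0 // gtr0_norm //; exact: Gk_bound.
  by rewrite Gk_le0 // mulr0 normr0 mulr_ge0 ?normr_ge0 // ler0n.
by apply: DeriveDef; [apply/cvg_ex; exists 0; exact: hq|exact: cvg_lim hq].
Qed.

Lemma dGk_pos (k : nat) (x : R) : 0 < x -> is_derive x (1:R) (Gk k) (Gk k.+2 x - k%:R * Gk k.+1 x).
Proof.
move=> hx.
have x0 : x != 0 by rewrite gt_eqF.
apply: (@near_eq_is_derive _ _ _ (fun y : R => (y^-1) ^+ k * expR (- y^-1))).
  near=> y; rewrite /Gk; have -> : 0 < y by near: y; exact: lt_nbhsr.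
  by [].
have d1 : is_derive x (1:R) (fun y : R => y^-1) (- 1 / x ^+ 2) by exact: dV x0 (dI x).
apply: (is_derive_eq (dM (dX k d1) (dE (dN d1)))).
rewrite /Gk hx; set t := x^-1.
have -> : - 1 / x ^+ 2 = - t ^+ 2 by rewrite /t exprVn mulN1r.
case: k => [|k] /=; first by rewrite !expr0; ring.
rewrite opprK -!natr1 !exprS; ring.
Unshelve. all: by end_near. Qed.

Lemma dGk_neg (k : nat) (x : R) : x < 0 -> is_derive x (1:R) (Gk k) (Gk k.+2 x - k%:R * Gk k.+1 x).
Proof.
move=> hx; rewrite !Gk_le0 ?ltW // mulr0 subr0.
apply: (@near_eq_is_derive _ _ _ (fun _ : R => (0:R))).
near=> y; rewrite Gk_le0 // ltW //; near: y; exact: lt_nbhsl.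
Unshelve. all: by end_near. Qed.

Lemma dGk (k : nat) (x : R) : is_derive x (1:R) (Gk k) (Gk k.+2 x - k%:R * Gk k.+1 x).
Proof.
case: (ltgtP x 0) => hx; [exact: dGk_neg|exact: dGk_pos|].
by rewrite hx !Gk_le0 // mulr0 subr0; exact: dGk0.
Qed.

Lemma SM_Gk k : SM (Gk k).
Proof.
move=> n; elim: n k => [|n IH] k; first by move=> x; case: (dGk k x).
apply: (Sm_step (F := fun x => Gk k.+2 x - k%:R * Gk k.+1 x)); first by move=> x; exact: dGk.
apply: Sm_add; first exact: IH.
apply: Sm_opp; apply: Sm_mul; [exact: Sm_cst|exact: IH].
Qed.

End Gk.


Section Step.
Variable R : realType.

Definition uS (x : R) : R := 1 * x + - 8^-1.
Definition vS (x : R) : R := -1 * x + 3 / 8.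
Definition Dn (x : R) : R := Gk 0 (uS x) + Gk 0 (vS x).
Definition S (x : R) : R := Gk 0 (uS x) * (Dn x)^-1.
Definition dS (x : R) : R :=
  (Gk 2 (uS x) * Gk 0 (vS x) + Gk 0 (uS x) * Gk 2 (vS x)) / Dn x ^+ 2.

Lemma Dn_gt0 (x : R) : 0 < Dn x.
Proof.
rewrite /Dn; have h1 := Gk_ge0 0 (uS x); have h2 := Gk_ge0 0 (vS x).
case: (ltP 8^-1 x) => hx.
  by have := @Gk_gt0 R 0 (uS x); rewrite /uS; lra.
by have := @Gk_gt0 R 0 (vS x); rewrite /vS; lra.
Qed.

Lemma Dn_neq0 (x : R) : Dn x != 0.
Proof. by rewrite gt_eqF // Dn_gt0. Qed.

Lemma SM_S : SM S.
Proof.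
rewrite /S /Dn /uS /vS.
apply: SM_mul; first exact: SM_aff (@SM_Gk R 0).
apply: SM_inv; first exact: Dn_neq0.
by apply: SM_add; apply: SM_aff; exact: (@SM_Gk R 0).
Qed.

Lemma S_le (x : R) : x <= 8^-1 -> S x = 0.
Proof. by move=> hx; rewrite /S [Gk 0 (uS x)]Gk_le0 ?mul0r // /uS; lra. Qed.

Lemma S_ge (x : R) : 3 / 8 <= x -> S x = 1.
Proof.
move=> hx; rewrite /S /Dn [Gk 0 (vS x)]Gk_le0 ?addr0 ?divff //.
  by rewrite gt_eqF // Gk_gt0 // /uS; lra.
by rewrite /vS; lra.
Qed.

Lemma S_ge0 (x : R) : 0 <= S x.
Proof. by rewrite /S mulr_ge0 ?Gk_ge0 // invr_ge0 ltW // Dn_gt0. Qed.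

Lemma S_le1 (x : R) : S x <= 1.
Proof.
rewrite /S ler_pdivrMr ?Dn_gt0 // mul1r /Dn lerDl Gk_ge0 //.
Qed.

Lemma S_sym (x : R) : S x + S (2^-1 - x) = 1.
Proof.
have e1 : uS (2^-1 - x) = vS x by rewrite /uS /vS; field.
have e2 : vS (2^-1 - x) = uS x by rewrite /uS /vS; field.
have := Dn_neq0 x; rewrite /S /Dn e1 e2 => h.
by field; rewrite addrC.
Qed.

Lemma dS_is (x : R) : is_derive x (1:R) S (dS x).
Proof.
have du : is_derive x (1:R) (fun y => Gk 0 (uS y)) (Gk 2 (uS x) * 1).
  apply: dAff; apply: is_derive_eq; first exact: dGk.
  by rewrite mul0r subr0.
have dv : is_derive x (1:R) (fun y => Gk 0 (vS y)) (Gk 2 (vS x) * -1).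
  apply: dAff; apply: is_derive_eq; first exact: dGk.
  by rewrite mul0r subr0.
apply: (is_derive_eq (dM du (dV (Dn_neq0 x) (dD du dv)))).
rewrite /dS /Dn; field; exact: Dn_neq0.
Qed.

Lemma dS_ge0 (x : R) : 0 <= dS x.
Proof. by rewrite /dS divr_ge0 ?sqr_ge0 // addr_ge0 // mulr_ge0 ?Gk_ge0. Qed.

Lemma Gk2_le2 (y : R) : Gk 2 y <= 2.
Proof.
case: (ltP 0 y) => hy; last by rewrite Gk_le0.
rewrite /Gk hy; set t := y^-1.
have ht : 0 < t by rewrite invr_gt0.
have e := expR_ge1Dxn 1 (ltW ht).
rewrite expRN -subr_ge0.
have hu := expR_gt0 t.
have -> : 2 - t ^+ 2 * (expR t)^-1 = (2 * expR t - t ^+ 2) / expR t.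
  by field; rewrite gt_eqF.
rewrite divr_ge0 ?subr_ge0 // ?ltW //.
move: e; rewrite /= (_ : (2`!)%:R = 2 :> R) //; lra.
Qed.

Lemma Dn_ge (x : R) : expR (- 8) <= Dn x.
Proof.
have key : forall y : R, 8^-1 <= y -> expR (- 8) <= Gk 0 y.
  move=> y hy; have y0 : 0 < y by apply: lt_le_trans hy; rewrite invr_gt0.
  rewrite /Gk y0 expr0 mul1r ler_expR lerN2 -[8]invrK lef_pV2 ?posrE ?invr_gt0 //.
rewrite /Dn /uS /vS; case: (lerP (4^-1) x) => hx.
  rewrite -[_ (- 8)]addr0; apply: lerD; [apply: key|exact: Gk_ge0]; lra.
rewrite -[_ (- 8)]add0r; apply: lerD; [exact: Gk_ge0|apply: key]; lra.
Qed.

Lemma dS_le (x : R) : dS x <= 2 * expR 8.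
Proof.
have hD := Dn_gt0 x.
have hN : Gk 2 (uS x) * Gk 0 (vS x) + Gk 0 (uS x) * Gk 2 (vS x) <= 2 * Dn x.
  have := Gk2_le2 (uS x); have := Gk2_le2 (vS x).
  have := Gk_ge0 0 (uS x); have := Gk_ge0 0 (vS x); rewrite /Dn; nra.
have h1 : dS x <= 2 / Dn x.
  have -> : 2 / Dn x = (2 * Dn x) / Dn x ^+ 2 by field; rewrite gt_eqF.
  by rewrite /dS ler_wpM2r // invr_ge0 exprn_ge0 // ltW.
apply: (le_trans h1); rewrite ler_pdivrMr //.
have e : 1 = expR 8 * expR (- 8) :> R by rewrite expRxMexpNx_1.
have := Dn_ge x; have := expR_gt0 (8:R); move: e; set E := expR 8; set F := expR (-8); nra.
Qed.

Lemma dS_le_zero (x : R) : x <= 8^-1 -> dS x = 0.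
Proof. by move=> hx; rewrite /dS !(Gk_le0 _ (x := uS x)) /uS; try lra; rewrite !mul0r mulr0 add0r mul0r. Qed.

Lemma dS_ge_zero (x : R) : 3 / 8 <= x -> dS x = 0.
Proof. by move=> hx; rewrite /dS !(Gk_le0 _ (x := vS x)) /vS; try lra; rewrite !mul0r mulr0 addr0 mul0r. Qed.

End Step.


Import numFieldNormedType.Exports.
Section Sig.
Variable R : realType.
Notation mu := (@lebesgue_measure R).

Lemma cont_of (f f' : R -> R) : (forall y, is_derive y (1:R) f (f' y)) -> continuous f.
Proof.
move=> h y; apply/differentiable_continuous/derivable1_diffP; by case: (h y).
Qed.

Lemma mono_ge (f f' : R -> R) (x y : R) : (forall z, is_derive z (1:R) f (f' z)) ->
  (forall z, 0 <= f' z) -> x <= y -> f x <= f y.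
Proof.
move=> hd hp xy.
have [c _ e] := @MVT_segment R f f' x y xy (fun z _ => hd z)
  (continuous_subspaceT (cont_of hd)).
by rewrite -subr_ge0 e mulr_ge0 // subr_ge0.
Qed.

Definition Sig (x : R) : R := (\int[mu]_(t in [set` `[(-1), x]]) (S t))%R.

Lemma Sig_le (x : R) : x <= 8^-1 -> Sig x = 0.
Proof.
move=> hx; rewrite /Sig (@eq_Rintegral _ _ _ mu _ (fun _ => 0)).
  by rewrite /Rintegral integral0.
move=> t; rewrite inE /= in_itv /= => /andP[_ ht]; apply: S_le; exact: le_trans ht hx.
Qed.

Lemma S_cont : continuous (@S R).
Proof. exact: (cont_of (@dS_is R)). Qed.

Lemma dSig (x : R) : is_derive x (1:R) Sig (S x).
Proof.
case: (ltP x 8^-1) => hx.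
  rewrite S_le ?ltW //.
  apply: (@near_eq_is_derive _ _ _ (fun _ : R => (0:R))).
  near=> y; rewrite Sig_le // ltW //; near: y; exact: lt_nbhsl.
have hint : mu.-integrable `[(-1), x + 1] (EFin \o (@S R)).
  apply: continuous_compact_integrable; first exact: segment_compact.
  exact: continuous_subspaceT S_cont.
have hx1 : (-1 : R) < x by apply: lt_le_trans hx; lra.
have [d1 d2] := @continuous_FTC1_closed R (@S R) (-1) x (x + 1) (ltr_pwDr ltr01 (lexx x)) hint hx1 (@S_cont x).
by apply: DeriveDef; [exact: d1|rewrite -derive1E; exact: d2].
Unshelve. all: by end_near. Qed.

Lemma SM_Sig : SM Sig.
Proof. apply: (SM_step (F := @S R)); [move=> x; exact: dSig|exact: SM_S]. Qed.

Lemma Sig_sym (x : R) : Sig x - Sig (-1 * x + 2^-1) - x = - 4^-1.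
Proof.
pose h := fun y : R => Sig y - Sig (-1 * y + 2^-1) - y.
have dh : forall y, is_derive y (1:R) h 0.
  move=> y; apply: (is_derive_eq (dB (dB (dSig y) (dAff (dSig _))) (dI y))).
  have := S_sym y; rewrite (_ : 2^-1 - y = -1 * y + 2^-1); last by ring.
  lra.
rewrite -/(h x) (@is_derive_0_is_cst _ h x 4^-1 dh) /h.
rewrite (_ : -1 * 4^-1 + 2^-1 = 4^-1 :> R); last by field.
by rewrite subrr sub0r.
Qed.

Lemma Sig_ge (x : R) : 3 / 8 <= x -> Sig x = x - 4^-1.
Proof.
move=> hx; have := Sig_sym x; rewrite (Sig_le (x := -1 * x + 2^-1)); last by lra.
lra.
Qed.

Lemma Sig_ge0 (x : R) : 0 <= Sig x.
Proof.
case: (lerP x 8^-1) => hx; first by rewrite Sig_le.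
rewrite -(Sig_le (lexx 8^-1)); apply: (mono_ge dSig) => //; [exact: S_ge0|exact: ltW].
Qed.

Lemma dIS (y : R) : is_derive y (1:R) (fun z => z - Sig z) (1 - S y).
Proof. exact: dB (dI y) (dSig y). Qed.

Lemma Sig_le_id (x : R) : 0 <= x -> Sig x <= x.
Proof.
move=> hx; have := mono_ge dIS (fun z => _) hx.
rewrite Sig_le; last by lra.
have H (z : R) : 0 <= 1 - S z by rewrite subr_ge0 S_le1.
move/(_ H); lra.
Qed.

Lemma Sig_lb (x : R) : x - 4^-1 <= Sig x.
Proof.
case: (lerP (3/8) x) => hx; first by rewrite Sig_ge.
have H (z : R) : 0 <= 1 - S z by rewrite subr_ge0 S_le1.
have := mono_ge dIS H (ltW hx); rewrite (@Sig_ge (3/8)) ?lexx; lra.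
Qed.

End Sig.


Section Ric.
Variable R : realType.
Variables (rho phi A1 A2 B1 B2 : R -> R).
Let A := fun s => (rho s * phi s) ^+ 2.
Let B := fun s => rho s ^+ 2.
Hypothesis hA : forall s, is_derive s (1:R) A (A1 s).
Hypothesis hA1 : forall s, is_derive s (1:R) A1 (A2 s).
Hypothesis hB : forall s, is_derive s (1:R) B (B1 s).
Hypothesis hB1 : forall s, is_derive s (1:R) B1 (B2 s).
Hypothesis pos : forall s, 0 < s -> A s != 0 /\ B s != 0.

Let G := g_rho_phi rho phi.

Definition Ef (F0 F1 F2 : R -> R) (i : 'I_4) (s : R) : R :=
  if nat_of_ord i == 0%N then F0 s else if nat_of_ord i == 1%N then F1 s else F2 s.
Let E := Ef (fun _ => 1) A B.
Let E1 := Ef (fun _ => 0) A1 B1.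
Let E2 := Ef (fun _ => 0) A2 B2.

Lemma dE0 i s : is_derive s (1:R) (E i) (E1 i s).
Proof. rewrite /E /E1 /Ef; case: ifP => _; first exact: dC.
by case: ifP. Qed.
Lemma dE1 i s : is_derive s (1:R) (E1 i) (E2 i s).
Proof. rewrite /E1 /E2 /Ef; case: ifP => _; first exact: dC.
by case: ifP. Qed.

Lemma Gentry s i j : G s i j = if i == j then E i s else 0.
Proof. by rewrite /G /g_rho_phi mxE; case: eqP. Qed.

Lemma dGentry i j r : derive1 (fun s => G s i j) r = if i == j then E1 i r else 0.
Proof.
apply: dder.
have -> : (fun s => G s i j) = (fun s => if i == j then E i s else 0).
  by apply/funext => s; rewrite Gentry.
case: eqP => _; [exact: dE0|exact: dC].
Qed.

Lemma Epos i s : 0 < s -> E i s != 0.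
Proof. move=> /pos [h1 h2]; rewrite /E /Ef; case: ifP => _; first exact: oner_neq0.
by case: ifP. Qed.

Lemma invG s : 0 < s -> invmx (G s) = \matrix_(i, j) if i == j then (E i s)^-1 else 0.
Proof.
move=> hs; set D := \matrix_(i, j) _.
have GD : G s *m D = 1%:M.
  apply/matrixP => i j; rewrite !mxE (bigD1 i) //= big1; last first.
    by move=> k /negPf ki; rewrite Gentry eq_sym ki mul0r.
  rewrite Gentry eqxx !mxE addr0; case: eqP => [->|_]; last by rewrite mulr0.
  by rewrite divff // Epos.
have [Gu _] := mulmx1_unit GD.
by rewrite -[invmx _]mulmx1 -GD mulmxA mulVmx // mul1mx.
Qed.

Definition kz (F F1 : 'I_4 -> R -> R) (x y z : 'I_4) (s : R) : R :=
  ((if (nat_of_ord x == 0%N) && (y == z) then F1 y s else 0)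
   + (if (nat_of_ord y == 0%N) && (x == z) then F1 x s else 0)
   - (if (nat_of_ord z == 0%N) && (x == y) then F1 x s else 0)
   + frameC R x y z * F z s - frameC R x z y * F y s - frameC R y z x * F x s) / 2.

Lemma fDG u v w s : frameD u (fun t => G t v w) s =
  if (nat_of_ord u == 0%N) && (v == w) then E1 v s else 0.
Proof. by rewrite /frameD; case: ifP => _ //=; rewrite dGentry. Qed.

Lemma koszulE x y z s : koszul G x y z s = kz E E1 x y z s.
Proof.
rewrite /koszul /kz !fDG.
have hs u v w : \sum_(e < 4) frameC R u v e * G s e w = frameC R u v w * E w s.
  rewrite (bigD1 w) //= big1; last by move=> k /negPf kw; rewrite Gentry kw mulr0.
  by rewrite Gentry eqxx addr0.
by rewrite !hs.
Qed.

Lemma christoffelE x y z s : 0 < s -> christoffel G x y z s = kz E E1 x y z s / E z s.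
Proof.
move=> hs; rewrite /christoffel invG // (bigD1 z) //= big1; last first.
  by move=> k /negPf kz0; rewrite mxE eq_sym kz0 mul0r.
by rewrite mxE eqxx koszulE addr0 mulrC.
Qed.

Lemma dkz x y z s : is_derive s (1:R) (kz E E1 x y z) (kz E1 E2 x y z s).
Proof.
rewrite /kz.
have di (b : bool) (F F' : R -> R) : (forall t, is_derive t (1:R) F (F' t)) ->
   is_derive s (1:R) (fun t => if b then F t else 0) (if b then F' s else 0).
  by case: b => h; [exact: h|exact: dC].
have dc (c : R) (F F' : R -> R) : (forall t, is_derive t (1:R) F (F' t)) ->
   is_derive s (1:R) (fun t => c * F t) (c * F' s).
  move=> h; have H := dM (dC c s) (h s); rewrite mul0r add0r in H; exact: H.
apply: is_derive_eq.
  apply: (dM _ (dC _ _)).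
  eapply dB; [eapply dB; [eapply dD; [eapply dB; [eapply dD|]|]|]|].
  - exact: di (dE1 _).
  - exact: di (dE1 _).
  - exact: di (dE1 _).
  - exact: dc (dE0 _).
  - exact: dc (dE0 _).
  - exact: dc (dE0 _).
rewrite /=; ring.
Qed.

Lemma dchristoffel x y z r : 0 < r ->
  derive1 (christoffel G x y z) r =
  (kz E1 E2 x y z r * E z r - kz E E1 x y z r * E1 z r) / (E z r) ^+ 2.
Proof.
move=> hr; apply: dder.
apply: (@near_eq_is_derive _ _ _ (fun s => kz E E1 x y z s * (E z s)^-1)).
  near=> s; rewrite christoffelE //; near: s; exact: lt_nbhsr.
apply: is_derive_eq; first exact: (dM (dkz x y z r) (dV (Epos z hr) (dE0 z r))).
have qr (p q c d : R) : c != 0 -> p / c + q * (- d / c ^+ 2) = (p * c - q * d) / c ^+ 2.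
  by move=> h; field.
by rewrite qr // Epos.
Unshelve. all: by end_near. Qed.

Definition RicD (i : nat) (r : R) : R :=
  match i with
  | 0%N => - (A2 r / (2 * A r) - A1 r ^+ 2 / (4 * A r ^+ 2))
           - 2 * (B2 r / (2 * B r) - B1 r ^+ 2 / (4 * B r ^+ 2))
  | 1%N => A r * (- (A2 r / (2 * A r) - A1 r ^+ 2 / (4 * A r ^+ 2))
           - 2 * (A1 r * B1 r) / (4 * A r * B r) + 2 * A r / B r ^+ 2)
  | _ => B r * (- (B2 r / (2 * B r) - B1 r ^+ 2 / (4 * B r ^+ 2))
           - (A1 r * B1 r) / (4 * A r * B r) - B1 r ^+ 2 / (4 * B r ^+ 2)
           + (4 * B r - 2 * A r) / B r ^+ 2)
  end.

Lemma ricciE b c r : 0 < r -> ricci G b c r = if b == c then RicD b r else 0.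
Proof.
move=> hr; have [hA0 hB0] := pos hr.
case: b => [[|[|[|[|//]]]] hb]; case: c => [[|[|[|[|//]]]] hc];
rewrite /ricci /riemann !big_ord_recr !big_ord0 /= /frameD /=;
rewrite !dchristoffel // !christoffelE //;
rewrite /kz /E /E1 /E2 /Ef /frameC /RicD /=; field; rewrite ?hA0 ?hB0 //.
Qed.
End Ric.

Section Pos.
Variable R : realFieldType.
Variables (a b e S dS : R).
Hypothesis ha : 0 < a.
Hypothesis hb : 1 <= b.
Hypothesis hab : a <= b.
Hypothesis he0 : 0 < e.
Hypothesis he : e <= 200^-1.
Hypothesis hS0 : 0 <= S.
Hypothesis hS1 : S <= 1.
Hypothesis hdS : 0 <= dS.
Hypothesis hcase : (S = 0 /\ dS = 0) \/ (2^-1 <= a /\ b <= a + 1 /\ e * dS * b <= 2^-1).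

Ltac ctx := move: (ha) (hb) (hab) (he0) (he) (hS0) (hS1) (hdS) => ha' hb' hab' he0' he' hS0' hS1' hdS'.

Let c := 4 - e.
Let a1 := 4 - c * S.
Let a2 := - c * dS.
Let b1 := e * S.
Let b2 := e * dS.
Let A := a ^+ 2.
Let A1 := 2 * a * a1.
Let A2 := 2 * a1 ^+ 2 + 2 * a * a2.
Let B := b ^+ 2.
Let B1 := 2 * b * b1.
Let B2 := 2 * b1 ^+ 2 + 2 * b * b2.

Let b0 : 0 < b. Proof. ctx. by apply: lt_le_trans hb. Qed.
Let a10 : 0 <= a1.
Proof.
ctx.
have h : 0 <= (4 - e) * (1 - S) by rewrite mulr_ge0 //; lra.
rewrite /a1 /c; lra.
Qed.
Let a14 : a1 <= 4.
Proof. ctx. have h : 0 <= (4 - e) * S by rewrite mulr_ge0 //; lra.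
rewrite /a1 /c; lra. Qed.
Let b10 : 0 <= b1. Proof. ctx. by rewrite /b1 mulr_ge0 // ltW. Qed.
Let b1e : b1 <= e. Proof. ctx. by rewrite /b1 ler_piMr // ltW. Qed.

Lemma Q0 : 0 <= - (A2 / (2 * A) - A1 ^+ 2 / (4 * A ^+ 2))
           - 2 * (B2 / (2 * B) - B1 ^+ 2 / (4 * B ^+ 2)).
Proof.
ctx.
have -> : - (A2 / (2 * A) - A1 ^+ 2 / (4 * A ^+ 2))
           - 2 * (B2 / (2 * B) - B1 ^+ 2 / (4 * B ^+ 2)) = dS * (c * b - 2 * e * a) / (a * b).
  rewrite /A2 /A1 /A /B2 /B1 /B /a2 /b2; field.
  by rewrite !gt_eqF.
apply: divr_ge0; last by nra.
apply: mulr_ge0 => //; rewrite /c; nra.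
Qed.

Lemma Q1 : 0 <= A * (- (A2 / (2 * A) - A1 ^+ 2 / (4 * A ^+ 2))
           - 2 * (A1 * B1) / (4 * A * B) + 2 * A / B ^+ 2).
Proof.
ctx.
have -> : A * (- (A2 / (2 * A) - A1 ^+ 2 / (4 * A ^+ 2))
           - 2 * (A1 * B1) / (4 * A * B) + 2 * A / B ^+ 2) =
   (c * dS * a * b ^+ 4 + 2 * a * (a ^+ 3 - a1 * b1 * b ^+ 3)) / b ^+ 4.
  rewrite /A2 /A1 /A /B2 /B1 /B /a2 /b2; field.
  by rewrite !gt_eqF.
apply: divr_ge0; last by rewrite exprn_ge0 // ltW.
have hc : 0 <= c by rewrite /c; lra.
have h1 : 0 <= c * dS * a * b ^+ 4.
  by rewrite !mulr_ge0 // ?exprn_ge0 // ltW.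
suff h2 : a1 * b1 * b ^+ 3 <= a ^+ 3 by apply: addr_ge0 => //; nra.
case: hcase => [[S0 _]|[a2h [bh _]]].
  by rewrite /b1 S0 mulr0 mulr0 mul0r exprn_ge0 // ltW.
have hb3 : b ^+ 3 <= 27 * a ^+ 3.
  have h3 : b ^+ 3 <= (3 * a) ^+ 3 by rewrite ler_pXn2r // ?nnegrE; lra.
  by move: h3; rewrite exprMn (_ : 3 ^+ 3 = 27 :> R) //; rewrite !exprS expr0; ring.
have hab1 : a1 * b1 <= 4 * e by apply: ler_pM => //.
have : a1 * b1 * b ^+ 3 <= 4 * e * (27 * a ^+ 3).
  by apply: ler_pM => //; [rewrite mulr_ge0|rewrite exprn_ge0 // ltW].
have : 0 <= a ^+ 3 by rewrite exprn_ge0 // ltW.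
nra.
Qed.

Lemma Q2 : 0 <= B * (- (B2 / (2 * B) - B1 ^+ 2 / (4 * B ^+ 2))
           - (A1 * B1) / (4 * A * B) - B1 ^+ 2 / (4 * B ^+ 2)
           + (4 * B - 2 * A) / B ^+ 2).
Proof.
ctx.
have -> : B * (- (B2 / (2 * B) - B1 ^+ 2 / (4 * B ^+ 2))
           - (A1 * B1) / (4 * A * B) - B1 ^+ 2 / (4 * B ^+ 2)
           + (4 * B - 2 * A) / B ^+ 2) =
   (b ^+ 2 * (2 * a - b2 * a * b - a1 * b1 * b - b1 ^+ 2 * a)
    + a * (2 * b ^+ 2 - 2 * a ^+ 2)) / (a * b ^+ 2).
  rewrite /A2 /A1 /A /B2 /B1 /B /a2 /b2; field.
  by rewrite !gt_eqF.
apply: divr_ge0; last by rewrite mulr_ge0 ?exprn_ge0 // ltW.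
have h2 : 0 <= a * (2 * b ^+ 2 - 2 * a ^+ 2).
  rewrite (_ : 2 * b ^+ 2 - 2 * a ^+ 2 = 2 * ((b - a) * (b + a))); last by ring.
  have u1 : 0 <= b - a by lra.
  have u2 : 0 <= b + a by lra.
  apply: mulr_ge0; first exact: ltW.
  apply: mulr_ge0; first by [].
  exact: mulr_ge0.
suff h1 : 0 <= 2 * a - b2 * a * b - a1 * b1 * b - b1 ^+ 2 * a.
  by apply: addr_ge0 => //; rewrite mulr_ge0 // exprn_ge0 // ltW.
case: hcase => [[S0 dS0]|[a2h [bh hk]]].
  rewrite /b1 /b2 S0 dS0; nra.
have t1 : b2 * a * b <= 2^-1 * a.
  have -> : b2 * a * b = (e * dS * b) * a by rewrite /b2; ring.
  by rewrite ler_wpM2r // ltW.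
have t2 : a1 * b1 * b <= 4 * e * (3 * a).
  apply: ler_pM; [exact: mulr_ge0|exact: ltW|exact: ler_pM|lra].
have t3 : b1 ^+ 2 * a <= e ^+ 2 * a.
  apply: ler_wpM2r; [exact: ltW| rewrite !expr2; exact: ler_pM b10 b10 b1e b1e].
have : e ^+ 2 <= e by rewrite expr2 ler_piMl ?ltW //; lra.
nra.
Qed.

End Pos.


Section Main.
Variable R : realType.

Definition eps : R := expR (- 100).
Definition c1 : R := 4 - eps.
Definition rhoF (r : R) : R := 1 + eps * Sig r.
Definition aF (r : R) : R := 4 * r - c1 * Sig r.
Definition phiF (r : R) : R := aF r / rhoF r.
Definition a1F (r : R) : R := 4 - c1 * S r.
Definition b1F (r : R) : R := eps * S r.

Lemma eps_gt0 : 0 < eps.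
Proof. exact: expR_gt0. Qed.

Lemma eps_small : eps <= 200^-1.
Proof.
rewrite /eps expRN -[X in _ <= X]invrK lef_pV2 ?posrE ?invr_gt0 ?expR_gt0 //.
apply: le_trans (expR_ge1Dxn 1 _); last by lra.
rewrite (_ : (2`!)%:R = 2 :> R) //; lra.
Qed.

Lemma eps8 : eps * expR 8 <= 8^-1.
Proof.
rewrite /eps -expRD (_ : - 100 + 8 = - 92 :> R); last by lra.
rewrite expRN -[X in _ <= X]invrK lef_pV2 ?posrE ?invr_gt0 ?expR_gt0 //.
apply: le_trans (expR_ge1Dx _); lra.
Qed.

Lemma rho_ge1 r : 1 <= rhoF r.
Proof. by rewrite /rhoF lerDl mulr_ge0 ?Sig_ge0 // ltW // eps_gt0. Qed.

Lemma rho_neq0 r : rhoF r != 0.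
Proof. by apply: lt0r_neq0; apply: lt_le_trans (rho_ge1 r). Qed.

Lemma rhophi r : rhoF r * phiF r = aF r.
Proof. by rewrite /phiF mulrC divfK // rho_neq0. Qed.

Lemma da r : is_derive r (1:R) aF (a1F r).
Proof.
apply: (is_derive_eq (dB (dM (dC 4 r) (dI r)) (dM (dC c1 r) (dSig r)))).
by rewrite /a1F; ring.
Qed.

Lemma da1 r : is_derive r (1:R) a1F (- c1 * dS r).
Proof.
apply: (is_derive_eq (dB (dC 4 r) (dM (dC c1 r) (dS_is r)))).
by ring.
Qed.

Lemma drho r : is_derive r (1:R) rhoF (b1F r).
Proof.
apply: (is_derive_eq (dD (dC 1 r) (dM (dC eps r) (dSig r)))).
by rewrite /b1F; ring.
Qed.

Lemma db1 r : is_derive r (1:R) b1F (eps * dS r).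
Proof.
apply: (is_derive_eq (dM (dC eps r) (dS_is r))).
by ring.
Qed.


Lemma Sig0 : Sig (0:R) = 0.
Proof. by rewrite Sig_le //; rewrite invr_ge0. Qed.

Lemma aF0 : aF 0 = 0.
Proof. by rewrite /aF Sig0 !mulr0 subr0. Qed.

Lemma S_le1' (r : R) : 0 <= 1 - S r.
Proof. by rewrite subr_ge0 S_le1. Qed.

Lemma a_ge_eps (r : R) : 0 <= r -> eps * r <= aF r.
Proof.
move=> hr.
have d z : is_derive z (1:R) (fun y => aF y - eps * y) (a1F z - eps * 1).
  by apply: (is_derive_eq (dB (da z) (dM (dC eps z) (dI z)))); ring.
have Hp z : 0 <= a1F z - eps * 1.
  rewrite mulr1 /a1F /c1 (_ : 4 - (4 - eps) * S z - eps = (4 - eps) * (1 - S z)); last by ring.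
  apply: mulr_ge0; last exact: S_le1'.
  by have := eps_small; lra.
have H := mono_ge d Hp hr; rewrite aF0 in H; lra.
Qed.

Lemma a_pos (r : R) : 0 < r -> 0 < aF r.
Proof.
move=> hr; apply: lt_le_trans (a_ge_eps (ltW hr)).
by rewrite mulr_gt0 // eps_gt0.
Qed.

Lemma a_le_rho (r : R) : aF r <= rhoF r.
Proof. have := Sig_lb r; rewrite /aF /rhoF /c1; lra. Qed.

Lemma rho_le (r : R) : 0 <= r -> rhoF r <= aF r + 1.
Proof. move=> hr; have := Sig_le_id hr; rewrite /aF /rhoF /c1; lra. Qed.

Lemma a1_ge0 (z : R) : 0 <= a1F z.
Proof.
rewrite /a1F /c1 (_ : 4 - (4 - eps) * S z = (4 - eps) * (1 - S z) + eps); last by ring.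
apply: addr_ge0; last exact: ltW eps_gt0.
apply: mulr_ge0; last exact: S_le1'.
by have := eps_small; lra.
Qed.

Lemma a_half (r : R) : 8^-1 <= r -> 2^-1 <= aF r.
Proof.
move=> hr; have H := mono_ge da a1_ge0 hr.
by move: H; rewrite /aF (Sig_le (lexx _)) mulr0 subr0 (_ : 4 * 8^-1 = 2^-1 :> R) //; field.
Qed.

Lemma key (r : R) : 0 <= r -> eps * dS r * rhoF r <= 2^-1.
Proof.
move=> hr; case: (lerP (3/8) r) => h38.
  by rewrite dS_ge_zero // mulr0 mul0r.
have hrho : rhoF r <= 2.
  have := Sig_le_id hr; have := eps_small; have := Sig_ge0 r; have := eps_gt0.
  rewrite /rhoF; nra.
have hd := dS_le r; have hd0 := dS_ge0 r; have he := eps8; have e0 := eps_gt0.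
have r1 := rho_ge1 r.
have : eps * dS r <= eps * (2 * expR 8) by rewrite ler_wpM2l // ltW.
have : 0 <= eps * dS r by rewrite mulr_ge0 // ltW.
nra.
Qed.

Definition A1f (s : R) : R := 2 * aF s * a1F s.
Definition A2f (s : R) : R := 2 * a1F s ^+ 2 + 2 * aF s * (- c1 * dS s).
Definition B1f (s : R) : R := 2 * rhoF s * b1F s.
Definition B2f (s : R) : R := 2 * b1F s ^+ 2 + 2 * rhoF s * (eps * dS s).

Lemma rhophiF : (fun s => (rhoF s * phiF s) ^+ 2) = (fun s => aF s ^+ 2).
Proof. by apply/funext => s; rewrite rhophi. Qed.

Lemma hA (s : R) : is_derive s (1:R) (fun s => (rhoF s * phiF s) ^+ 2) (A1f s).
Proof.
rewrite rhophiF; apply: (is_derive_eq (dX 2 (da s))).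
by rewrite /A1f expr1; ring.
Qed.

Lemma hA1 (s : R) : is_derive s (1:R) A1f (A2f s).
Proof.
apply: (is_derive_eq (dM (dM (dC 2 s) (da s)) (da1 s))).
by rewrite /A2f; ring.
Qed.

Lemma hB (s : R) : is_derive s (1:R) (fun s => rhoF s ^+ 2) (B1f s).
Proof.
apply: (is_derive_eq (dX 2 (drho s))).
by rewrite /B1f expr1; ring.
Qed.

Lemma hB1 (s : R) : is_derive s (1:R) B1f (B2f s).
Proof.
apply: (is_derive_eq (dM (dM (dC 2 s) (drho s)) (db1 s))).
by rewrite /B2f; ring.
Qed.

Lemma hpos (s : R) : 0 < s -> (rhoF s * phiF s) ^+ 2 != 0 /\ rhoF s ^+ 2 != 0.
Proof.
move=> hs; rewrite rhophi; split; rewrite expf_neq0 //; first by rewrite gt_eqF // a_pos.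
exact: rho_neq0.
Qed.

Lemma RicD_ge0 (i : nat) (r : R) : 0 < r ->
  0 <= RicD rhoF phiF A1f A2f B1f B2f i r.
Proof.
move=> hr.
have ha := a_pos hr; have hb := rho_ge1 r; have hab := a_le_rho r.
have he0 := @eps_gt0; have he := @eps_small.
have hS0 := S_ge0 r; have hS1 := S_le1 r; have hdS := dS_ge0 r.
have hcase : (S r = 0 /\ dS r = 0) \/
    (2^-1 <= aF r /\ rhoF r <= aF r + 1 /\ eps * dS r * rhoF r <= 2^-1).
  case: (lerP r 8^-1) => h8; first by left; rewrite S_le // dS_le_zero.
  right; split; first exact: a_half (ltW h8).
  by split; [exact: rho_le (ltW hr)|exact: key (ltW hr)].
rewrite /RicD rhophi /A1f /A2f /B1f /B2f /a1F /b1F /c1.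
case: i => [|[|i]].
- exact: (Q0 ha hb hab he0 he hS0 hS1 hdS).
- exact: (Q1 ha hb hab he0 he hS0 hS1 hdS hcase).
- exact: (Q2 ha hb hab he0 he hS0 hS1 hdS hcase).
Qed.

Lemma ric_nonneg : ricci_nonneg (g_rho_phi rhoF phiF).
Proof.
move=> r hr v.
have E b c : ricci (g_rho_phi rhoF phiF) b c r =
    if b == c then RicD rhoF phiF A1f A2f B1f B2f b r else 0.
  exact: (ricciE hA hA1 hB hB1 hpos b c hr).
apply: sumr_ge0 => b _.
rewrite (bigD1 b) //= E eqxx big1 ?addr0; last first.
  by move=> c /negPf cb; rewrite E eq_sym cb !mul0r.
rewrite -mulrA mulr_ge0 ?RicD_ge0 //.
by rewrite -expr2 sqr_ge0.
Qed.

Lemma SM_aF : SM aF.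
Proof.
rewrite /aF; apply: SM_add; first by apply: SM_mul; [exact: SM_cst|exact: SM_id].
by apply: SM_opp; apply: SM_mul; [exact: SM_cst|exact: SM_Sig].
Qed.

Lemma SM_rho : SM rhoF.
Proof. rewrite /rhoF; apply: SM_add; first exact: SM_cst.
by apply: SM_mul; [exact: SM_cst|exact: SM_Sig]. Qed.

Lemma SM_phi : SM phiF.
Proof. rewrite /phiF; apply: SM_mul; first exact: SM_aF.
by apply: SM_inv; [exact: rho_neq0|exact: SM_rho]. Qed.

Lemma loc (f g : R -> R) (c : R) : (forall y, y < c -> f y = g y) ->
  forall n y, y < c -> derive1n n f y = derive1n n g y.
Proof.
move=> hfg n; elim: n => [|n IH] y hy; first by rewrite !derive1n0 hfg.
rewrite !derive1nS !derive1E; apply: near_eq_derive.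
near=> z; apply: IH; near: z; exact: lt_nbhsl.
Unshelve. all: by end_near. Qed.

Lemma dn_cst0 n : derive1n n (fun _ : R => (0:R)) = (fun _ => 0).
Proof.
elim: n => [|n IH]; first by rewrite derive1n0.
rewrite derive1nS IH; apply/funext => x; apply: dder; exact: dC.
Qed.

Lemma dn_cst n (c : R) : derive1n n.+1 (fun _ : R => c) = (fun _ => 0).
Proof.
rewrite derive1Sn (_ : derive1 _ = fun _ => 0) ?dn_cst0 //.
by apply/funext => x; apply: dder; exact: dC.
Qed.

Lemma d_lin : derive1 (fun r : R => 4 * r) = (fun _ => 4).
Proof.
apply/funext => x; apply: dder.
by apply: (is_derive_eq (dM (dC 4 x) (dI x))); ring.
Qed.

Lemma rho_loc (y : R) : y < 8^-1 -> rhoF y = 1.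
Proof. by move=> h; rewrite /rhoF Sig_le ?ltW // mulr0 addr0. Qed.

Lemma a_loc (y : R) : y < 8^-1 -> aF y = 4 * y.
Proof. by move=> h; rewrite /aF Sig_le ?ltW // mulr0 subr0. Qed.

Lemma phi_loc (y : R) : y < 8^-1 -> phiF y = 4 * y.
Proof. by move=> h; rewrite /phiF a_loc // rho_loc // divr1. Qed.

Lemma main_all :
  exists rho phi : R -> R,
    (smooth rho /\ smooth phi) /\
    (forall r : R, 0 <= r -> 0 <= rho r /\ 0 <= phi r) /\
    (forall r : R, 0 < r -> 0 < rho r /\ 0 < phi r) /\
    (rho 0 = 1 /\ (forall k : nat, derive1n k.*2.+1 rho 0 = 0)) /\
    (phi 0 = 0 /\ derive1 phi 0 = 4 /\
     (forall k : nat, derive1n k.*2 (fun r => rho r * phi r) 0 = 0)) /\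
    (forall r : R, 2 <= r -> derive1 rho r = expR (- 100)) /\
    (forall r : R, 2 <= r -> phi r = 1) /\
    ricci_nonneg (g_rho_phi rho phi).
Proof.
have h80 : (0:R) < 8^-1 by rewrite invr_gt0.
exists rhoF, phiF.
have P1 : smooth rhoF /\ smooth phiF.
  by split; apply: SM_smooth; [exact: SM_rho|exact: SM_phi].
have P2 : forall r : R, 0 <= r -> 0 <= rhoF r /\ 0 <= phiF r.
  move=> r hr; split; first by apply: le_trans (rho_ge1 r).
  apply: divr_ge0; last by apply: le_trans (rho_ge1 r).
  apply: le_trans (a_ge_eps hr); apply: mulr_ge0 => //; exact: ltW eps_gt0.
have P3 : forall r : R, 0 < r -> 0 < rhoF r /\ 0 < phiF r.
  move=> r hr; split; first by apply: lt_le_trans (rho_ge1 r).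
  by apply: divr_gt0; [exact: a_pos|apply: lt_le_trans (rho_ge1 r)].
have P4 : rhoF 0 = 1 /\ (forall k : nat, derive1n k.*2.+1 rhoF 0 = 0).
  split; first by rewrite rho_loc.
  move=> k; rewrite (@loc rhoF (fun _ => 1) 8^-1 rho_loc) //.
  by rewrite dn_cst.
have P5 : phiF 0 = 0 /\ derive1 phiF 0 = 4 /\
     (forall k : nat, derive1n k.*2 (fun r => rhoF r * phiF r) 0 = 0).
  split; first by rewrite phi_loc // mulr0.
  split.
    rewrite -derive1n1 (@loc phiF (fun r => 4 * r) 8^-1 phi_loc) // derive1n1.
    by rewrite d_lin.
  move=> k.
  rewrite (@loc _ (fun r => 4 * r) 8^-1) //; last by move=> y hy; rewrite rhophi a_loc.
  case: k => [|k]; first by rewrite derive1n0 mulr0.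
  by rewrite (_ : (k.+1).*2 = (k.*2).+1.+1)%N // derive1Sn d_lin dn_cst.
have P6 : forall r : R, 2 <= r -> derive1 rhoF r = expR (- 100).
  move=> r hr; rewrite (dder (drho r)) /b1F S_ge ?mulr1 //.
  by apply: le_trans hr; lra.
have P7 : forall r : R, 2 <= r -> phiF r = 1.
  move=> r hr; rewrite /phiF.
  have -> : aF r = rhoF r.
    rewrite /aF /rhoF /c1 Sig_ge; last by apply: le_trans hr; lra.
    by field.
  by rewrite divff // rho_neq0.
exact: (conj P1 (conj P2 (conj P3 (conj P4 (conj P5 (conj P6 (conj P7 ric_nonneg))))))).
Qed.
End Main.



Unset Implicit Arguments. Set Strict Implicit.

Theorem proposition2p2 (R : realType) :
  exists rho phi : R -> R,
    (smooth rho /\ smooth phi) /\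
    (forall r : R, 0 <= r -> 0 <= rho r /\ 0 <= phi r) /\
    (forall r : R, 0 < r -> 0 < rho r /\ 0 < phi r) /\
    (rho 0 = 1 /\ (forall k : nat, derive1n k.*2.+1 rho 0 = 0)) /\
    (phi 0 = 0 /\ derive1 phi 0 = 4 /\
     (forall k : nat, derive1n k.*2 (fun r => rho r * phi r) 0 = 0)) /\
    (forall r : R, 2 <= r -> derive1 rho r = expR (- 100)) /\
    (forall r : R, 2 <= r -> phi r = 1) /\
    ricci_nonneg (g_rho_phi rho phi).
Proof. exact: (@main_all R). Qed.
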